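(* Let $n\ge 2$, $d\ge 1$, and let $\lambda_-<\lambda_+$ be in $(-1,1)$. There is no set of Gram-representable conditions that is necessary and sufficient for $\mathcal{W}_{\lambda_-,\lambda_+}$-interpolability of a set of pairs of variables $\{(\mathbf{x}^k,\mathbf{y}^k)\}_{k\in I}$, $\mathbf{x}^k,\mathbf{y}^k\in\mathbb{R}^{nd}$.
   Context: $\mathcal{W}_{\lambda_-,\lambda_+}$ denotes the set of symmetric matrices $W\in\mathbb{R}^{n\times n}$ whose largest eigenvalue is $\lambda_1(W)=1$ with eigenvector $\mathbf{1}/\sqrt{n}$ and whose other eigenvalues satisfy $\lambda_-\le\lambda_n(W)\le\dots\le\lambda_2(W)\le\lambda_+$. A vector $\mathbf{x}\in\mathbb{R}^{nd}$ stacks the local vectors $x_1,\dots,x_n\in\mathbb{R}^d$ of $n$ agents. For a finite index set $I$, a set of pairs $\{(\mathbf{x}^k,\mathbf{y}^k)\}_{k\in I}$ is $\mathcal{W}_{\lambda_-,\lambda_+}$-interpolable if there exists $W\in\mathcal{W}_{\lambda_-,\lambda_+}$ with $\mathbf{y}^k=(W\otimes I_d)\mathbf{x}^k$ for all $k\in I$. A condition is Gram-representable if it can be expressed as a finite set of linear constraints or linear matrix inequalities in the entries of the Gram matrix of the vectors $x_i^k,y_i^k\in\mathbb{R}^d$ ($i=1,\dots,n$, $k\in I$), i.e. in their pairwise scalar products (the dimension $d$ being left free). *)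

(* Defs.v *)
From HB Require Import structures.
From mathcomp Require Import all_boot all_order all_algebra.
From mathcomp Require Import reals.
Set Implicit Arguments. Unset Strict Implicit. Unset Printing Implicit Defensive.
Import Order.TTheory GRing.Theory Num.Theory.
Local Open Scope ring_scope.

(* W belongs to W_{lm,lp}: symmetric, with eigenvalue 1 of eigenvector the
   all-ones vector (proportional to 1/sqrt n), and the remaining eigenvalues
   (the spectrum, with multiplicity, given by the characteristic polynomial)
   mu_1..mu_{n-1} satisfying lm <= mu_i <= lp and mu_i <= 1 (so that 1 is the
   largest eigenvalue lambda_1). *)
Definition in_Wset (R : realType) (n : nat) (lm lp : R) (W : 'M[R]_n) : Prop :=
  W^T = W /\
  W *m (const_mx 1 : 'cV[R]_n) = const_mx 1 /\
  exists mu : 'I_n.-1 -> R,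
    char_poly W = ('X - 1%:P) * \prod_(i < n.-1) ('X - (mu i)%:P) /\
    (forall i, lm <= mu i <= lp) /\ (forall i, mu i <= 1).

(* A stacked vector x in R^{nd} is represented by the n x d matrix whose
   i-th row is the local vector x_i in R^d; then (W (x) I_d) x = W *m X. *)
Definition interpolable (R : realType) (n d m : nat) (lm lp : R)
  (X Y : 'I_m -> 'M[R]_(n, d)) : Prop :=
  exists W : 'M[R]_n, in_Wset lm lp W /\ forall k, Y k = W *m X k.

(* Index set of the vectors x_i^k, y_i^k : (is_y, agent i, index k). *)
Definition gidx (n m : nat) : finType := ((bool * 'I_n) * 'I_m)%type.

Definition gvec (R : realType) (n d m : nat) (X Y : 'I_m -> 'M[R]_(n, d))
  (j : gidx n m) : 'rV[R]_d :=
  row j.1.2 (if j.1.1 then Y j.2 else X j.2).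

Definition gram (R : realType) (n d m : nat) (X Y : 'I_m -> 'M[R]_(n, d))
  (a b : gidx n m) : R :=
  (gvec X Y a *m (gvec X Y b)^T) 0 0.

Definition psd (R : realType) (s : nat) (M : 'M[R]_s) : Prop :=
  M^T = M /\ forall v : 'rV[R]_s, 0 <= (v *m M *m v^T) 0 0.

Inductive gram_atom (R : realType) (J : finType) : Type :=
| GLinEq of R & (J -> J -> R)
| GLinGe of R & (J -> J -> R)
| GLMI (s : nat) of 'M[R]_s & (J -> J -> 'M[R]_s).

Definition lin_form (R : realType) (J : finType) (c0 : R) (c : J -> J -> R)
  (G : J -> J -> R) : R :=
  c0 + \sum_(a : J) \sum_(b : J) c a b * G a b.

Definition atom_holds (R : realType) (J : finType) (G : J -> J -> R)
  (t : gram_atom R J) : Prop :=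
  match t with
  | GLinEq c0 c => lin_form c0 c G = 0
  | GLinGe c0 c => 0 <= lin_form c0 c G
  | @GLMI _ _ s A0 A => psd (A0 + \sum_(a : J) \sum_(b : J) G a b *: A a b)
  end.

Definition gram_cond_holds (R : realType) (J : finType) (C : seq (gram_atom R J))
  (G : J -> J -> R) : Prop :=
  foldr (fun t P => atom_holds G t /\ P) True C.

(* Main.v *)
From HB Require Import structures.
From mathcomp Require Import all_boot all_order all_algebra.
From mathcomp Require Import reals.
Require Import Defs.
From mathcomp Require Import ring.
Import Order.TTheory GRing.Theory Num.Theory.
Local Open Scope ring_scope.



Lemma char_poly_simil (R : comNzRingType) k (P Q D : 'M[R]_k.+1) :
  P *m Q = 1 -> char_poly (P *m D *m Q) = char_poly D.
Proof.
move=> PQ.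
have PQ' : map_mx polyC P *m map_mx polyC Q = 1.
  by rewrite -map_mxM PQ map_mx1.
rewrite /char_poly /char_poly_mx.
have -> : 'X%:M - map_mx polyC (P *m D *m Q) =
   map_mx polyC P *m ('X%:M - map_mx polyC D) *m map_mx polyC Q.
  rewrite !map_mxM mulmxBr mulmxBl mul_mx_scalar -scalemxAl PQ'.
  by rewrite -mul_mx_scalar mul1mx.
by rewrite !det_mulmx mulrAC -det_mulmx PQ' det1 mul1r.
Qed.

Section W.
Variable R : realType.
Variable k : nat.
Variable mu : R.
Let c : R := (1 - mu) / (k.+1)%:R.
Definition Wm : 'M[R]_k.+1 := \matrix_(i,j) (mu * (i==j)%:R + (1-mu)/(k.+1)%:R).
Let e0 : 'cV[R]_k.+1 := delta_mx ord0 0.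
Let w : 'rV[R]_k.+1 := \row_j (j != ord0)%:R.
Let u : 'cV[R]_k.+1 := const_mx 1.
Let Pm : 'M[R]_k.+1 := 1%:M - e0 *m w.
Let Qm : 'M[R]_k.+1 := 1%:M + e0 *m w.

Lemma we0 : w *m e0 = 0.
Proof.
apply/matrixP => i j; rewrite !mxE big1 // => l _; rewrite !mxE.
by case: (l == ord0); rewrite ?mulr0 ?mul0r.
Qed.

Lemma EE : e0 *m w *m (e0 *m w) = 0.
Proof. by rewrite mulmxA -(mulmxA e0) we0 mulmx0 mul0mx. Qed.

Lemma PQ : Pm *m Qm = 1%:M.
Proof.
by rewrite /Pm /Qm mulmxDr !mulmxBl !mulmx1 !mul1mx EE subr0 subrK.
Qed.

Lemma QP : Qm *m Pm = 1%:M.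
Proof.
by rewrite /Pm /Qm mulmxBr !mulmxDl !mulmx1 !mul1mx EE addr0 addrK.
Qed.

Lemma sum_neq0 : \sum_(l < k.+1) (l != ord0)%:R = k%:R :> R.
Proof.
rewrite big_ord_recl eqxx add0r (eq_bigr (fun _ => 1)).
  by rewrite sumr_const card_ord.
by move=> i _; rewrite eq_sym neq_lift.
Qed.

Lemma Wm_eq : Wm = mu%:M + c *: (u *m u^T).
Proof.
apply/matrixP => i j; rewrite !mxE big_ord1 !mxE mulr1.
by rewrite mulr1 mulr_natr.
Qed.

Definition Dm : 'M[R]_k.+1 := \matrix_(i, j) (mu * (i==j)%:R + c * (1 + k%:R * (i == ord0)%:R) * (j == ord0)%:R).

Lemma Qu : Qm *m u = \col_i (1 + k%:R * (i == ord0)%:R).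
Proof.
apply/matrixP => i j; rewrite mulmxDl mul1mx -mulmxA !mxE big_ord1 /e0 /w /u.
rewrite !mxE (ord1 j) eqxx andbT mulrC; congr (_ + _); congr (_ * _).
rewrite -sum_neq0; apply: eq_bigr => l _; rewrite !mxE mulr1 //.
Qed.

Lemma uP : u^T *m Pm = \row_j (j == ord0)%:R.
Proof.
apply/matrixP => i j; rewrite mulmxBr mulmx1 mulmxA !mxE big_ord1 (ord1 i).
have -> : (u^T *m e0) 0 0 = 1.
  rewrite mxE (bigD1 ord0) //= big1 ?addr0 /u /e0; first by rewrite !mxE !eqxx mulr1.
  by move=> l /negbTE hl; rewrite !mxE hl mulr0.
by rewrite mul1r /w !mxE; case: eqP => _; rewrite ?subr0 ?subrr.
Qed.

Lemma D_eq : Qm *m Wm *m Pm = Dm.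
Proof.
rewrite Wm_eq (mulmxDr Qm) (mulmxDl (Qm *m mu%:M)) (mul_mx_scalar mu Qm).
rewrite -[Qm *m (c *: _)]scalemxAr -[(mu *: Qm) *m Pm]scalemxAl -[(c *: _) *m Pm]scalemxAl QP.
rewrite mulmxA -(mulmxA (Qm *m u)) Qu uP.
apply/matrixP => i j; rewrite !mxE big_ord1 !mxE. by rewrite mulrA.
Qed.


Lemma kR_neq0 : (k.+1)%:R != 0 :> R.
Proof. by rewrite pnatr_eq0. Qed.

Lemma Dtrig : is_trig_mx Dm.
Proof.
apply/is_trig_mxP => i j lt_ij; rewrite !mxE.
have -> : (i == j) = false by apply/negbTE; rewrite neq_ltn lt_ij.
have -> : (j == ord0) = false by apply/negbTE; rewrite -val_eqE /= -lt0n (leq_ltn_trans _ lt_ij).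
by rewrite !mulr0 addr0.
Qed.

Lemma Wm_in (lm lp : R) : lm <= mu <= lp -> mu <= 1 -> in_Wset lm lp Wm.
Proof.
move=> hmu hmu1; split.
  by apply/matrixP => i j; rewrite !mxE eq_sym.
split.
  apply/matrixP => i j; rewrite !mxE.
  rewrite (eq_bigr (fun l => mu * (i == l)%:R + c)); last first.
    by move=> l _; rewrite !mxE mulr1.
  rewrite big_split /= sumr_const card_ord -mulr_natr /c divfK ?kR_neq0 //.
  rewrite (bigD1 i) //= eqxx mulr1 big1 ?addr0; first by rewrite addrC subrK.
  by move=> l /negbTE; rewrite eq_sym => ->; rewrite mulr0.
exists (fun _ => mu); split; last by split.
have -> : Wm = Pm *m (Qm *m Wm *m Pm) *m Qm.
  by rewrite !mulmxA PQ mul1mx -mulmxA PQ mulmx1.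
rewrite char_poly_simil ?PQ // D_eq char_poly_trig ?Dtrig // big_ord_recl.
congr (_ * _).
  rewrite !mxE eqxx !mulr1 nat1r /c divfK ?kR_neq0 //.
  by rewrite [mu + _]addrC subrK.
apply: eq_bigr => i _; rewrite !mxE eqxx mulr1.
have -> : (lift ord0 i == ord0) = false by apply/negbTE; rewrite eq_sym neq_lift.
by rewrite !mulr0 addr0.
Qed.

End W.

Lemma lin_conv (R : realType) (J : finType) (c0 : R) (c : J -> J -> R)
  (G G1 G2 : J -> J -> R) (s t : R) : s + t = 1 ->
  (forall a b, G a b = s * G1 a b + t * G2 a b) ->
  lin_form c0 c G = s * lin_form c0 c G1 + t * lin_form c0 c G2.
Proof.
move=> hst hG; rewrite /lin_form.
have -> : \sum_a \sum_b c a b * G a b =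
   s * (\sum_a \sum_b c a b * G1 a b) + t * (\sum_a \sum_b c a b * G2 a b).
  rewrite !mulr_sumr -big_split; apply: eq_bigr => a _.
  rewrite !mulr_sumr -big_split; apply: eq_bigr => b _.
  by rewrite hG /=; ring.
have e : c0 = s * c0 + t * c0 by rewrite -mulrDl hst mul1r.
by rewrite {1}e; ring.
Qed.

Lemma conv_holds (R : realType) (J : finType) (C : seq (gram_atom R J))
  (G G1 G2 : J -> J -> R) (s t : R) : 0 <= s -> 0 <= t -> s + t = 1 ->
  (forall a b, G a b = s * G1 a b + t * G2 a b) ->
  gram_cond_holds C G1 -> gram_cond_holds C G2 -> gram_cond_holds C G.
Proof.
move=> s0 t0 hst hG; elim: C => //= atm C IH [h1 H1] [h2 H2]; split; last exact: IH.
case: atm h1 h2 => [c0 c|c0 c|sz A0 A] /=.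
- by rewrite (@lin_conv _ _ c0 c _ _ _ _ _ hst hG) => e1 e2; rewrite e1 e2 !mulr0 addr0.
- rewrite (@lin_conv _ _ c0 c _ _ _ _ _ hst hG) => h1 h2.
  by apply: addr_ge0; apply: mulr_ge0.
- have -> : A0 + \sum_a \sum_b G a b *: A a b =
     s *: (A0 + \sum_a \sum_b G1 a b *: A a b) +
     t *: (A0 + \sum_a \sum_b G2 a b *: A a b).
    rewrite !scalerDr addrACA -scalerDl hst scale1r; congr (_ + _).
    rewrite !scaler_sumr -big_split; apply: eq_bigr => a _.
    rewrite !scaler_sumr -big_split; apply: eq_bigr => b _.
    by rewrite hG !scalerA scalerDl.
  set M1 := A0 + _; set M2 := A0 + _ => -[T1 q1] [T2 q2]; split.
    by rewrite linearD /= !linearZ /= T1 T2.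
  move=> v; rewrite mulmxDr mulmxDl -!scalemxAr -!scalemxAl.
  have h : forall X Y : 'M[R]_1, 0 <= X 0 0 -> 0 <= Y 0 0 -> 0 <= (s *: X + t *: Y) 0 0.
    by move=> X Y hX hY; rewrite !mxE; apply: addr_ge0; apply: mulr_ge0.
  exact: h.
Qed.

Lemma sum_delta (R : realType) n (a : 'I_n) (F : 'I_n -> R) :
  \sum_l (l == a)%:R * F l = F a.
Proof.
rewrite (bigD1 a) //= eqxx mul1r big1 ?addr0 // => l /negbTE ->.
by rewrite mul0r.
Qed.

Section Main.
Variable R : realType.
Variable k : nat.
Let N := k.+2.
Let o1 : 'I_N := lift ord0 ord0.
Definition vv (i : 'I_N) : R := (i == ord0)%:R - (i == o1)%:R.

Lemma sum_vv : \sum_l vv l = 0.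
Proof.
rewrite /vv sumrB.
have h : forall a : 'I_N, \sum_(l < N) (l == a)%:R = 1 :> R.
  by move=> a; rewrite -[RHS](@sum_delta _ _ a (fun _ => 1)); apply: eq_bigr => l _; rewrite mulr1.
by rewrite !h subrr.
Qed.

Definition X1 : 'I_1 -> 'M[R]_(N, 1) := fun _ => \matrix_(i, j) vv i.
Definition Ymu (mu : R) : 'I_1 -> 'M[R]_(N, 1) := fun _ => \matrix_(i, j) (mu * vv i).

Lemma interp_mu (lm lp mu : R) : lm <= mu <= lp -> mu <= 1 ->
  interpolable lm lp X1 (Ymu mu).
Proof.
move=> h1 h2; exists (@Wm R k.+1 mu); split; first exact: Wm_in.
move=> kk; apply/matrixP => i j; rewrite !mxE.
rewrite (eq_bigr (fun l => mu * ((l == i)%:R * vv l) + (1 - mu) / N%:R * vv l)).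
  by rewrite big_split /= -mulr_sumr -mulr_sumr sum_delta sum_vv mulr0 addr0.
by move=> l _; rewrite !mxE eq_sym; ring.
Qed.


Definition a0 : R := 3 / 5.
Definition b0 : R := 4 / 5.
Lemma ab1 : a0 ^+ 2 + b0 ^+ 2 = 1.
Proof. by rewrite /a0 /b0; field. Qed.

Definition Xc : 'I_1 -> 'M[R]_(N, 2) :=
  fun _ => \matrix_(i, j) ((if j == ord0 then a0 else b0) * vv i).
Definition Yc (l1 l2 : R) : 'I_1 -> 'M[R]_(N, 2) :=
  fun _ => \matrix_(i, j) ((if j == ord0 then a0 * l1 else b0 * l2) * vv i).

Lemma gram_c (l1 l2 : R) p q : gram Xc (Yc l1 l2) p q =
  a0 ^+ 2 * gram X1 (Ymu l1) p q + b0 ^+ 2 * gram X1 (Ymu l2) p q.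
Proof.
case: p => [[bp ip] kp]; case: q => [[bq iq] kq]; rewrite /gram /gvec /=.
rewrite !mxE !big_ord_recl !big_ord0.
have L : (lift ord0 (ord0 : 'I_1) == ord0 :> 'I_2) = false by [].
case: bp; case: bq; rewrite !mxE /= ?L ?eqxx; ring.
Qed.
End Main.

Theorem theorem1 (R : realType) (n : nat) (lm lp : R) :
  (2 <= n)%N -> -1 < lm -> lm < lp -> lp < 1 ->
  exists m : nat,
    ~ exists C : seq (gram_atom R (gidx n m)),
        forall (d : nat), (1 <= d)%N ->
        forall X Y : 'I_m -> 'M[R]_(n, d),
          gram_cond_holds C (gram X Y) <-> interpolable lm lp X Y.
Proof.
move=> hn hlm hlmlp hlp; exists 1%N; case: n hn => [|[|k]] // _ [C HC].
have hlm' : lm <= lm <= lp by rewrite lexx ltW.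
have hlp' : lm <= lp <= lp by rewrite lexx ltW.
have H1 := (HC 1%N isT (X1 R k) (@Ymu R k lm)).2
  (@interp_mu R k lm lp lm hlm' (ltW (lt_trans hlmlp hlp))).
have H2 := (HC 1%N isT (X1 R k) (@Ymu R k lp)).2
  (@interp_mu R k lm lp lp hlp' (ltW hlp)).
have Hc : gram_cond_holds C (gram (Xc R k) (@Yc R k lm lp)).
  apply: (@conv_holds _ _ C _ _ _ (a0 R ^+ 2) (b0 R ^+ 2) (sqr_ge0 _) (sqr_ge0 _)
     (ab1 R) (fun p q => @gram_c R k lm lp p q) H1 H2).
have [W [_ HW]] := (HC 2%N isT _ _).1 Hc.
have e := HW ord0.
have E0 := congr1 (fun M : 'M[R]_(_, 2) => M ord0 ord0) e.
have E1 := congr1 (fun M : 'M[R]_(_, 2) => M ord0 (lift ord0 ord0)) e.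
simpl in E0, E1.
set S := \sum_l W ord0 l * @vv R k l.
have key : forall c : R, \sum_l W ord0 l * (c * vv R k l) = c * S.
  by move=> c; rewrite /S mulr_sumr; apply: eq_bigr => l _; ring.
have hv0 : @vv R k ord0 = 1 by rewrite /vv eqxx; rewrite -val_eqE /= subr0.
have L : (lift ord0 (ord0 : 'I_1) == ord0 :> 'I_2) = false by [].
have a0n : a0 R != 0 by rewrite gt_eqF // /a0 divr_gt0 ?ltr0n.
have b0n : b0 R != 0 by rewrite gt_eqF // /b0 divr_gt0 ?ltr0n.
have key2 : forall j0 : 'I_2, \sum_l W ord0 l * Xc R k ord0 l j0 =
    (if j0 == ord0 then a0 R else b0 R) * S.
  by move=> j0; rewrite /S mulr_sumr; apply: eq_bigr => l _; rewrite mxE; ring.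
move: E0 E1; rewrite !mxE !key2 eqxx L hv0 !mulr1.
move=> /(mulfI a0n) e1 /(mulfI b0n) e2.
by move: hlmlp; rewrite e1 e2 ltxx.
Qed.
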